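(* Let $p>0$, let $X_p$ be the $p$-singular Cantor-type random variable with CDF $F_p$, and let $m_p$ and $e_p$ be its mean residual life and generalized mean residual life functions. Then: (i) $\mathbb E[X_p]=\dfrac32\cdot\dfrac{p}{2p+1}$. (ii) $m_p$ is continuous on $[0,1]$, $e_p$ is continuous on $(0,1)$, and for every $x\in(0,1)$, each of $m_p$ and $e_p$ is locally decreasing at $x$ if and only if $x\in[0,1]\setminus\mathcal C$. (iii) The equation $m_p(x)=x$ has a unique solution $x_p^*$ in $[0,1]$, given by $$x_p^*=\frac16+\frac{5p+4}{12(2p+1)}.$$ Moreover, $p\mapsto x_p^*$ is decreasing on $(0,\infty)$ and $x_p^*\in(3/8,1/2)$ for every $p>0$.
   Context: For $p>0$, the $p$-singular Cantor-type distribution has CDF $F_p:[0,1]\to\mathbb R$, defined as the unique real-valued, monotone nondecreasing function satisfying (a) $F_p(x/3)=F_p(x)/(p+1)$ for all $x\in[0,1]$, and (b) $F_p(1-x)=1-pF_p(x)$ for all $x\in[0,1/3]$. It is continuous, with $F_p(0)=0$, $F_p(1)=1$, and $F_p(x)=1/(p+1)$ for all $x\in[1/3,2/3]$. For $p=1$ it is the Cantor distribution. The Cantor set is $\mathcal C=\bigcap_{n\ge1}C_n$, where $C_0=[0,1]$ and $C_n=\tfrac13C_{n-1}\cup(\tfrac23+\tfrac13C_{n-1})$. The MRL function of $X_p$ is $m_p(x)=\frac{1}{1-F_p(x)}\int_x^1(1-F_p(u))\,du$ for $x<1$ and $m_p(x)=0$ for $x\ge1$. The generalized MRL function is $e_p(x)=m_p(x)/x$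 for $0<x<1$. A function $f:(0,1)\to\mathbb R$ is locally decreasing at $x$ if there is an open neighborhood $U$ of $x$ such that $f|_U$ is non-increasing. *)

(* Defs.v *)
From Stdlib Require Import Reals Lra ClassicalEpsilon.
Open Scope R_scope.

(* F is the CDF of the p-singular Cantor-type distribution: the unique
   monotone nondecreasing real function on [0,1] satisfying (a) and (b). *)
Definition is_Fp (p : R) (F : R -> R) : Prop :=
  (forall x y, 0 <= x -> x <= y -> y <= 1 -> F x <= F y) /\
  (forall x, 0 <= x <= 1 -> F (x / 3) = F x / (p + 1)) /\
  (forall x, 0 <= x <= 1/3 -> F (1 - x) = 1 - p * F x).

Definition RInt (f : R -> R) (a b : R) : R :=
  epsilon (inhabits 0) (fun v => exists pr : Riemann_integrable f a b, RiemannInt pr = v).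

(* Expectation of a [0,1]-valued random variable with CDF F. *)
Definition mean (F : R -> R) : R := RInt (fun u => 1 - F u) 0 1.

Definition mrl (F : R -> R) (x : R) : R :=
  if Rlt_dec x 1 then RInt (fun u => 1 - F u) x 1 / (1 - F x) else 0.

Definition gmrl (F : R -> R) (x : R) : R := mrl F x / x.

(* C_n: C_0 = [0,1], C_n = C_{n-1}/3 ∪ (2/3 + C_{n-1}/3). *)
Fixpoint in_Cn (n : nat) (x : R) : Prop :=
  match n with
  | O => 0 <= x <= 1
  | S k => in_Cn k (3 * x) \/ in_Cn k (3 * x - 2)
  end.

Definition cantor (x : R) : Prop := forall n, in_Cn n x.

(* f : (0,1) -> R is locally decreasing at x: there is an open neighbourhood
   U of x (taken as an open interval, intersected with the domain (0,1))
   on which f is non-increasing. *)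
Definition loc_decr (f : R -> R) (x : R) : Prop :=
  exists d, 0 < d /\
    forall y z, x - d < y -> y <= z -> z < x + d -> 0 < y -> z < 1 -> f z <= f y.

Definition xstar (p : R) : R := 1/6 + (5 * p + 4) / (12 * (2 * p + 1)).

(* Main.v *)
Require Import Defs.
From Stdlib Require Import Reals Lra Lia ClassicalEpsilon Classical.
From Coquelicot Require Import Coquelicot.
Open Scope R_scope.
Lemma F0 p F : 0 < p -> is_Fp p F -> F 0 = 0.
Proof.
  intros hp [hm [ha hb]].
  pose proof (ha 0 ltac:(lra)) as h. replace (0/3) with 0 in h by field.
  assert (F 0 * (p+1) = F 0). { rewrite h at 1. field. lra. }
  assert (F 0 * p = 0) by lra.
  apply Rmult_integral in H0 as [H0|H0]; lra.
Qed.

Lemma F1 p F : 0 < p -> is_Fp p F -> F 1 = 1.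
Proof.
  intros hp hF. pose proof (F0 p F hp hF).
  destruct hF as [hm [ha hb]]. pose proof (hb 0 ltac:(lra)) as h.
  replace (1-0) with 1 in h by ring. rewrite h, H. ring.
Qed.

Lemma Fleft p F : 0 < p -> is_Fp p F -> forall x, 0 <= x <= 1/3 -> F x = F (3*x) / (p+1).
Proof.
  intros hp [hm [ha hb]] x hx. rewrite <- ha by lra. f_equal. field.
Qed.

Lemma F13 p F : 0 < p -> is_Fp p F -> F (1/3) = 1/(p+1).
Proof.
  intros hp hF. rewrite (Fleft p F hp hF) by lra. replace (3*(1/3)) with 1 by field.
  rewrite (F1 p F hp hF). reflexivity.
Qed.

Lemma Fright p F : 0 < p -> is_Fp p F -> forall x, 2/3 <= x <= 1 -> F x = 1 - p * (F (3 - 3*x) / (p+1)).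
Proof.
  intros hp hF x hx. pose proof hF as [hm [ha hb]].
  replace x with (1 - (1-x)) at 1 by ring. rewrite hb by lra.
  rewrite (Fleft p F hp hF (1-x)) by lra. replace (3*(1-x)) with (3-3*x) by ring. reflexivity.
Qed.

Lemma F23 p F : 0 < p -> is_Fp p F -> F (2/3) = 1/(p+1).
Proof.
  intros hp hF. rewrite (Fright p F hp hF) by lra. replace (3 - 3*(2/3)) with 1 by field.
  rewrite (F1 p F hp hF). field. lra.
Qed.

Lemma Fmono p F : is_Fp p F -> forall x y, 0 <= x -> x <= y -> y <= 1 -> F x <= F y.
Proof. intros [hm _]; exact hm. Qed.

Lemma Fmid p F : 0 < p -> is_Fp p F -> forall x, 1/3 <= x <= 2/3 -> F x = 1/(p+1).
Proof.
  intros hp hF x hx. pose proof (Fmono p F hF (1/3) x ltac:(lra) ltac:(lra) ltac:(lra)).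
  pose proof (Fmono p F hF x (2/3) ltac:(lra) ltac:(lra) ltac:(lra)).
  rewrite (F13 p F hp hF) in H. rewrite (F23 p F hp hF) in H0. lra.
Qed.

Lemma Frange p F : 0 < p -> is_Fp p F -> forall x, 0 <= x <= 1 -> 0 <= F x <= 1.
Proof.
  intros hp hF x hx. pose proof (Fmono p F hF 0 x ltac:(lra) ltac:(lra) ltac:(lra)).
  pose proof (Fmono p F hF x 1 ltac:(lra) ltac:(lra) ltac:(lra)).
  rewrite (F0 p F hp hF) in H. rewrite (F1 p F hp hF) in H0. lra.
Qed.

Lemma pow13_le1 n : (1/3)^n <= 1.
Proof. induction n; simpl; [lra|]. assert (0 <= (1/3)^n) by (apply pow_le; lra). lra. Qed.

Definition qq p := Rmax 1 p / (p+1).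

Lemma qq_bounds p : 0 < p -> 0 < qq p < 1 /\ 1/(p+1) <= qq p /\ p/(p+1) <= qq p.
Proof.
  intros hp. unfold qq. unfold Rdiv.
  assert (0 < / (p+1)) by (apply Rinv_0_lt_compat; lra).
  assert (/(p+1) * (p+1) = 1) by (field; lra).
  destruct (Rle_dec 1 p).
  - rewrite Rmax_right by lra. repeat split; try nra.
  - rewrite Rmax_left by lra. repeat split; try nra.
Qed.

Lemma Fmod p F : 0 < p -> is_Fp p F -> forall n x y, 0 <= x -> x <= y -> y <= 1 ->
  y - x <= (1/3)^n -> F y - F x <= (qq p)^n.
Proof.
  intros hp hF n. pose proof (qq_bounds p hp) as [[q0 q1] [q2 q3]].
  pose proof (Fmono p F hF) as hm.
  induction n as [|n IH]; intros x y hx hxy hy hd.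
  - simpl. pose proof (Frange p F hp hF x) . pose proof (Frange p F hp hF y). lra.
  - simpl in hd |- *.
    assert (hpow : 0 < (1/3)^n) by (apply pow_lt; lra).
    assert (hq : 0 <= qq p ^ n) by (apply pow_le; lra).
    assert (left : forall a b, 0 <= a -> a <= b -> b <= 1/3 -> b - a <= 1/3 * (1/3)^n ->
              F b - F a <= qq p * qq p ^ n).
    { intros a b ha hab hb hd'.
      rewrite (Fleft p F hp hF a), (Fleft p F hp hF b) by lra.
      specialize (IH (3*a) (3*b) ltac:(lra) ltac:(lra) ltac:(lra) ltac:(lra)).
      replace (F (3*b) / (p+1) - F (3*a)/(p+1)) with (1/(p+1) * (F (3*b) - F (3*a))) by (field; lra).
      assert (0 < 1/(p+1)) by (apply Rdiv_lt_0_compat; lra).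
      assert (0 <= F (3*b) - F (3*a)) by (apply Rge_le, Rge_minus, Rle_ge, hm; lra).
      apply Rle_trans with (qq p * (F (3*b) - F (3*a))). nra. nra. }
    assert (right : forall a b, 2/3 <= a -> a <= b -> b <= 1 -> b - a <= 1/3 * (1/3)^n ->
              F b - F a <= qq p * qq p ^ n).
    { intros a b ha hab hb hd'.
      rewrite (Fright p F hp hF a), (Fright p F hp hF b) by lra.
      specialize (IH (3-3*b) (3-3*a) ltac:(lra) ltac:(lra) ltac:(lra) ltac:(lra)).
      replace (1 - p * (F (3 - 3*b) / (p+1)) - (1 - p * (F (3 - 3*a) / (p+1))))
        with (p/(p+1) * (F (3 - 3*a) - F (3-3*b))) by (field; lra).
      assert (0 < p/(p+1)) by (apply Rdiv_lt_0_compat; lra).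
      assert (0 <= F (3-3*a) - F (3-3*b)) by (apply Rge_le, Rge_minus, Rle_ge, hm; lra).
      apply Rle_trans with (qq p * (F (3-3*a) - F (3-3*b))). nra. nra. }
    assert (0 <= qq p * qq p ^ n) by nra.
    pose proof (pow13_le1 n).
    destruct (Rle_dec y (1/3)).
    + apply left; lra.
    + destruct (Rle_dec (2/3) x).
      * apply right; lra.
      * destruct (Rle_dec x (1/3)).
        -- assert (y <= 2/3) by lra.
           rewrite (Fmid p F hp hF y) by lra. rewrite <- (F13 p F hp hF). apply left; lra.
        -- destruct (Rle_dec y (2/3)).
           ++ rewrite (Fmid p F hp hF y), (Fmid p F hp hF x) by lra. lra.
           ++ rewrite (Fmid p F hp hF x) by lra. rewrite <- (F23 p F hp hF). apply right; lra.
Qed.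

Definition clamp x := Rmax 0 (Rmin 1 x).
Definition Fe (F : R -> R) x := F (clamp x).

Lemma clamp_range x : 0 <= clamp x <= 1.
Proof. unfold clamp. destruct (Rle_dec x 1); [rewrite Rmin_right by lra|rewrite Rmin_left by lra];
  destruct (Rle_dec 0 x); try (rewrite Rmax_right by lra); try (rewrite Rmax_left by lra); lra. Qed.

Lemma clamp_id x : 0 <= x <= 1 -> clamp x = x.
Proof. intros. unfold clamp. rewrite Rmin_right by lra. rewrite Rmax_right by lra. reflexivity. Qed.

Lemma clamp_lip x y : Rabs (clamp x - clamp y) <= Rabs (x - y).
Proof. unfold clamp.
  destruct (Rle_dec x 1); [rewrite (Rmin_right 1 x) by lra|rewrite (Rmin_left 1 x) by lra];
  destruct (Rle_dec y 1); try rewrite (Rmin_right 1 y) by lra; try rewrite (Rmin_left 1 y) by lra;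
  destruct (Rle_dec 0 x); try (rewrite (Rmax_right 0 x) by lra); try (rewrite (Rmax_left 0 x) by lra);
  destruct (Rle_dec 0 y); try (rewrite (Rmax_right 0 y) by lra); try (rewrite (Rmax_left 0 y) by lra);
  try rewrite (Rmax_right 0 1) by lra; try rewrite (Rmax_left 0 1) by lra;
  unfold Rabs; repeat destruct Rcase_abs; lra.
Qed.

Lemma clamp_mono x y : x <= y -> clamp x <= clamp y.
Proof. intros. unfold clamp.
  destruct (Rle_dec x 1); [rewrite (Rmin_right 1 x) by lra|rewrite (Rmin_left 1 x) by lra];
  destruct (Rle_dec y 1); try rewrite (Rmin_right 1 y) by lra; try rewrite (Rmin_left 1 y) by lra;
  destruct (Rle_dec 0 x); try (rewrite (Rmax_right 0 x) by lra); try (rewrite (Rmax_left 0 x) by lra);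
  destruct (Rle_dec 0 y); try (rewrite (Rmax_right 0 y) by lra); try (rewrite (Rmax_left 0 y) by lra);
  try rewrite (Rmax_right 0 1) by lra; try rewrite (Rmax_left 0 1) by lra; lra.
Qed.

Lemma Fe_id F x : 0 <= x <= 1 -> Fe F x = F x.
Proof. intros. unfold Fe. rewrite clamp_id; auto. Qed.

Lemma Fe_mono p F : is_Fp p F -> forall x y, x <= y -> Fe F x <= Fe F y.
Proof. intros hF x y h. unfold Fe. pose proof (clamp_range x). pose proof (clamp_range y).
  apply (Fmono p F hF); try lra. apply clamp_mono; auto. Qed.

Lemma Fe_range p F : 0 < p -> is_Fp p F -> forall x, 0 <= Fe F x <= 1.
Proof. intros. unfold Fe. apply (Frange p F); auto. apply clamp_range. Qed.

Lemma Fe_cont p F : 0 < p -> is_Fp p F -> forall x, continuity_pt (Fe F) x.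
Proof.
  intros hp hF x. unfold continuity_pt, continue_in, limit1_in, limit_in. simpl. unfold R_dist.
  intros eps heps. pose proof (qq_bounds p hp) as [[q0 q1] _].
  destruct (pow_lt_1_zero (qq p) ltac:(rewrite Rabs_right; lra) eps heps) as [N HN].
  specialize (HN N (le_n _)). rewrite Rabs_right in HN by (apply Rle_ge, pow_le; lra).
  exists ((1/3)^N). split. apply pow_lt; lra.
  intros y [_ hy]. pose proof (clamp_lip y x). unfold Fe.
  pose proof (clamp_range x). pose proof (clamp_range y).
  destruct (Rle_dec (clamp x) (clamp y)).
  - pose proof (Fmod p F hp hF N (clamp x) (clamp y) ltac:(lra) ltac:(lra) ltac:(lra)).
    pose proof (Fmono p F hF (clamp x) (clamp y) ltac:(lra) ltac:(lra) ltac:(lra)).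
    rewrite Rabs_right in H by lra. rewrite Rabs_right by lra. apply Rle_lt_trans with (qq p ^ N); auto.
    apply H2. lra.
  - pose proof (Fmod p F hp hF N (clamp y) (clamp x) ltac:(lra) ltac:(lra) ltac:(lra)).
    pose proof (Fmono p F hF (clamp y) (clamp x) ltac:(lra) ltac:(lra) ltac:(lra)).
    rewrite Rabs_left1 in H by lra. rewrite Rabs_left1 by lra. 
    apply Rle_lt_trans with (qq p ^ N); auto. assert (F (clamp x) - F (clamp y) <= qq p ^ N) by (apply H2; lra). lra.
Qed.

Lemma Fe_ex p F : 0 < p -> is_Fp p F -> forall a b, ex_RInt (Fe F) a b.
Proof.
  intros hp hF a b. apply (@ex_RInt_continuous R_CompleteNormedModule). intros z _. apply continuity_pt_filterlim.
  apply (Fe_cont p F hp hF).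
Qed.

Lemma G_ex p F : 0 < p -> is_Fp p F -> forall a b, ex_RInt (fun u => 1 - Fe F u) a b.
Proof.
  intros hp hF a b. apply (ex_RInt_minus (fun _ => 1) (Fe F)). apply ex_RInt_const. apply (Fe_ex p F hp hF).
Qed.

Lemma RInt_G p F : 0 < p -> is_Fp p F -> forall a b, RInt (fun u => 1 - Fe F u) a b = (b - a) - RInt (Fe F) a b :> R.
Proof.
  intros hp hF a b. rewrite (RInt_minus (fun _ => 1) (Fe F)). rewrite RInt_const. change (minus (scal (b - a) 1) (RInt (Fe F) a b) = b - a - RInt (Fe F) a b). unfold minus, plus, opp, scal; simpl; unfold mult; simpl; ring.
  apply ex_RInt_const. apply (Fe_ex p F hp hF).
Qed.

Lemma Defs_RInt_eq p F : 0 < p -> is_Fp p F -> forall a b, 0 <= a <= b -> b <= 1 ->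
  Defs.RInt (fun u => 1 - F u) a b = RInt (fun u => 1 - Fe F u) a b.
Proof.
  intros hp hF a b hab hb.
  assert (ext : forall x, Rmin a b < x < Rmax a b -> 1 - Fe F x = 1 - F x).
  { intros x hx. rewrite Rmin_left in hx by lra. rewrite Rmax_right in hx by lra. rewrite Fe_id by lra. reflexivity. }
  assert (hex : ex_RInt (fun u => 1 - F u) a b).
  { apply (ex_RInt_ext _ _ _ _ ext). apply (G_ex p F hp hF). }
  rewrite (RInt_ext _ _ _ _ ext).
  unfold Defs.RInt.
  destruct (epsilon_spec (inhabits 0) (fun v => exists pr : Riemann_integrable (fun u => 1 - F u) a b, RiemannInt pr = v))
    as [pr hpr].
  { exists (RiemannInt (ex_RInt_Reals_0 _ _ _ hex)). exists (ex_RInt_Reals_0 _ _ _ hex). reflexivity. }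
  rewrite <- hpr. symmetry. apply RInt_Reals.
Qed.
Ltac req := match goal with |- @eq _ ?a ?b => change (@eq R a b) end.

Lemma RInt_scal_R (f : R -> R) k a b : ex_RInt f a b -> RInt (fun u => k * f u) a b = k * RInt f a b.
Proof. intros. apply (RInt_scal f a b k). auto. Qed.
Lemma RInt_lin_R (f : R -> R) u v a b : ex_RInt f (u*a+v) (u*b+v) -> RInt (fun y => u * f (u*y+v)) a b = RInt f (u*a+v) (u*b+v).
Proof. intros. apply (RInt_comp_lin f u v a b). auto. Qed.
Lemma RInt_plus_R (f g : R -> R) a b : ex_RInt f a b -> ex_RInt g a b -> RInt (fun u => f u + g u) a b = RInt f a b + RInt g a b.
Proof. intros. apply (RInt_plus f g a b); auto. Qed.
Lemma RInt_const_R (c a b : R) : RInt (fun _ => c) a b = (b - a) * c.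
Proof. apply (RInt_const a b c). Qed.
Lemma RInt_swap_R (f : R -> R) a b : ex_RInt f a b -> - RInt f a b = RInt f b a.
Proof. intros. apply (opp_RInt_swap f a b). auto. Qed.
Lemma RInt_ext_R (f g : R -> R) a b : (forall x, Rmin a b < x < Rmax a b -> f x = g x) -> RInt f a b = RInt g a b.
Proof. intros. apply (RInt_ext f g a b). auto. Qed.
Lemma ex_lin_R (f : R -> R) u v a b : ex_RInt f (u*a+v) (u*b+v) -> ex_RInt (fun y => u * f (u*y+v)) a b.
Proof. intros. apply (ex_RInt_comp_lin f u v a b). auto. Qed.
Lemma ex_scal_R (f : R -> R) k a b : ex_RInt f a b -> ex_RInt (fun u => k * f u) a b.
Proof. intros. apply (ex_RInt_scal f a b k). auto. Qed.

Lemma Chas p F : 0 < p -> is_Fp p F -> forall a b c, RInt (Fe F) a b + RInt (Fe F) b c = RInt (Fe F) a c :> R.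
Proof. intros hp hF a b c. rewrite <- (RInt_Chasles (Fe F) a b c); try apply (Fe_ex p F hp hF). reflexivity. Qed.

Lemma RI_left p F : 0 < p -> is_Fp p F -> forall a b, 0 <= a -> a <= b -> b <= 1/3 ->
  RInt (Fe F) a b = RInt (Fe F) (3*a) (3*b) / (3*(p+1)) :> R.
Proof.
  intros hp hF a b ha hab hb.
  rewrite (RInt_ext_R (Fe F) (fun u => (/(3*(p+1))) * (3 * (Fe F (3*u+0))))).
  2:{ intros x hx. rewrite Rmin_left in hx by lra. rewrite Rmax_right in hx by lra.
      replace (3*x+0) with (3*x) by ring.
      rewrite !Fe_id by lra. rewrite (Fleft p F hp hF x) by lra. field. lra. }
  rewrite RInt_scal_R. rewrite RInt_lin_R.
  replace (3*a+0) with (3*a) by ring. replace (3*b+0) with (3*b) by ring. req; field; lra.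
  apply (Fe_ex p F hp hF).
  apply ex_lin_R. apply (Fe_ex p F hp hF).
Qed.

Lemma RI_right p F : 0 < p -> is_Fp p F -> forall a b, 2/3 <= a -> a <= b -> b <= 1 ->
  RInt (Fe F) a b = (b - a) - p/(3*(p+1)) * RInt (Fe F) (3-3*b) (3-3*a) :> R.
Proof.
  intros hp hF a b ha hab hb.
  rewrite (RInt_ext_R (Fe F) (fun u => 1 + (p/(3*(p+1))) * ((-3) * (Fe F (-3*u+3))))).
  2:{ intros x hx. rewrite Rmin_left in hx by lra. rewrite Rmax_right in hx by lra.
      replace (-3*x+3) with (3-3*x) by ring.
      rewrite !Fe_id by lra. rewrite (Fright p F hp hF x) by lra. field. lra. }
  rewrite RInt_plus_R. rewrite RInt_const_R. rewrite RInt_scal_R. rewrite RInt_lin_R.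
  rewrite <- (RInt_swap_R (Fe F) (-3*b+3)).
  replace (-3*a+3) with (3-3*a) by ring. replace (-3*b+3) with (3-3*b) by ring. req; field; lra.
  apply (Fe_ex p F hp hF). apply (Fe_ex p F hp hF).
  apply ex_lin_R. apply (Fe_ex p F hp hF).
  apply ex_RInt_const.
  apply ex_scal_R. apply ex_lin_R. apply (Fe_ex p F hp hF).
Qed.

Lemma RI_mid p F : 0 < p -> is_Fp p F -> forall a b, 1/3 <= a -> a <= b -> b <= 2/3 ->
  RInt (Fe F) a b = (b - a) / (p+1) :> R.
Proof.
  intros hp hF a b ha hab hb.
  rewrite (RInt_ext_R (Fe F) (fun _ => 1/(p+1))).
  2:{ intros x hx. rewrite Rmin_left in hx by lra. rewrite Rmax_right in hx by lra.
      rewrite !Fe_id by lra. apply (Fmid p F hp hF). lra. }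
  rewrite RInt_const_R. req; field; lra.
Qed.

Definition SS p := (p+2)/(4*p+2).

Lemma S_val p F : 0 < p -> is_Fp p F -> RInt (Fe F) 0 1 = SS p :> R.
Proof.
  intros hp hF.
  pose proof (Chas p F hp hF 0 (1/3) 1). pose proof (Chas p F hp hF (1/3) (2/3) 1).
  rewrite (RI_left p F hp hF 0 (1/3)) in H by lra.
  rewrite (RI_mid p F hp hF (1/3) (2/3)) in H0 by lra.
  rewrite (RI_right p F hp hF (2/3) 1) in H0 by lra.
  replace (3*0) with 0 in H by ring. replace (3*(1/3)) with 1 in H by field.
  replace (3-3*1) with 0 in H0 by ring. replace (3-3*(2/3)) with 1 in H0 by field.
  rewrite <- H0 in H. set (S := RInt (Fe F) 0 1 : R) in *. unfold SS.
  assert (S * (3*(p+1)) = S + (2/3 - 1/3) * 3 + (1 - 2/3) * 3*(p+1) - p * S) by (rewrite <- H at 1; field; lra).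
  assert (S * (4*p+2) = p+2) by lra.
  rewrite <- H2. req; field; lra.
Qed.

Definition TT F x : R := RInt (Fe F) x 1.
Definition II F x := (1 - x) - TT F x.
Definition GG F x := 1 - Fe F x.
Definition HH F x := II F x / GG F x.

Lemma RInt_Fe_bounds p F : 0 < p -> is_Fp p F -> forall a b, a <= b ->
  (b - a) * Fe F a <= RInt (Fe F) a b <= (b - a) * Fe F b.
Proof.
  intros hp hF a b hab. split.
  - rewrite <- RInt_const_R. apply RInt_le; auto. apply ex_RInt_const. apply (Fe_ex p F hp hF).
    intros x hx. apply (Fe_mono p F hF). lra.
  - rewrite <- RInt_const_R. apply RInt_le; auto. apply (Fe_ex p F hp hF). apply ex_RInt_const.
    intros x hx. apply (Fe_mono p F hF). lra.
Qed.

Lemma II_split p F : 0 < p -> is_Fp p F -> forall a b, II F a = (b - a) - RInt (Fe F) a b + II F b.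
Proof. intros hp hF a b. unfold II, TT. rewrite <- (Chas p F hp hF a b 1). ring. Qed.

Lemma Fe_1 p F : 0 < p -> is_Fp p F -> Fe F 1 = 1.
Proof. intros. rewrite Fe_id by lra. apply (F1 p F); auto. Qed.

Lemma II_bounds p F : 0 < p -> is_Fp p F -> forall x, x <= 1 -> 0 <= II F x <= (1 - x) * GG F x.
Proof.
  intros hp hF x hx. pose proof (II_split p F hp hF x 1). unfold II at 2 in H. unfold TT in H.
  rewrite RInt_point in H. pose proof (RInt_Fe_bounds p F hp hF x 1 hx).
  rewrite (Fe_1 p F hp hF) in H0. unfold GG. change (zero : R) with 0 in H. nra.
Qed.

Lemma II_lip p F : 0 < p -> is_Fp p F -> forall x y, x <= y -> 0 <= II F x - II F y <= y - x.
Proof.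
  intros hp hF x y hxy. pose proof (II_split p F hp hF x y). pose proof (RInt_Fe_bounds p F hp hF x y hxy).
  pose proof (Fe_range p F hp hF x). pose proof (Fe_range p F hp hF y). nra.
Qed.

Lemma II_decr_G p F : 0 < p -> is_Fp p F -> forall a b, a <= b ->
  II F a <= (b - a) * GG F a + II F b.
Proof.
  intros hp hF a b hab. pose proof (II_split p F hp hF a b). pose proof (RInt_Fe_bounds p F hp hF a b hab).
  unfold GG. nra.
Qed.

Lemma pow_le1_gen a n : 0 <= a <= 1 -> a ^ n <= 1.
Proof. intros h. induction n; simpl; [lra|]. assert (0 <= a^n) by (apply pow_le; lra). nra. Qed.

Lemma inv_p1 p : 0 < p -> 0 < 1/(p+1) < 1.
Proof. intros hp. assert (0 < /(p+1)) by (apply Rinv_0_lt_compat; lra).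
  assert (/(p+1) * (p+1) = 1) by (field; lra). unfold Rdiv. rewrite Rmult_1_l. nra. Qed.

Lemma F_lower p F : 0 < p -> is_Fp p F -> forall n x, (1/3)^n <= x <= 1 -> (1/(p+1))^n <= F x.
Proof.
  intros hp hF n. induction n as [|n IH]; intros x hx.
  - simpl in *. assert (x = 1) by lra. subst. rewrite (F1 p F hp hF). lra.
  - simpl in *. assert (0 < (1/3)^n) by (apply pow_lt; lra).
    assert (0 < 1/(p+1) < 1) by (apply inv_p1; lra).
    assert ((1/(p+1))^n <= 1) by (apply pow_le1_gen; lra).
    destruct (Rle_dec (1/3) x).
    + pose proof (Fmono p F hF (1/3) x ltac:(lra) ltac:(lra) ltac:(lra)). rewrite (F13 p F hp hF) in H2.
      assert (0 <= (1/(p+1))^n) by (apply pow_le; lra). nra.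
    + rewrite (Fleft p F hp hF x) by lra. specialize (IH (3*x) ltac:(lra)).
      replace (F (3*x)/(p+1)) with (1/(p+1) * F(3*x)) by (field; lra). apply Rmult_le_compat_l; lra.
Qed.

Lemma Fpos p F : 0 < p -> is_Fp p F -> forall x, 0 < x <= 1 -> 0 < F x.
Proof.
  intros hp hF x hx. destruct (pow_lt_1_zero (1/3) ltac:(rewrite Rabs_right; lra) x ltac:(lra)) as [N HN].
  specialize (HN N (le_n _)). rewrite Rabs_right in HN by (apply Rle_ge, pow_le; lra).
  pose proof (F_lower p F hp hF N x ltac:(lra)). assert (0 < (1/(p+1))^N) by (apply pow_lt, Rdiv_lt_0_compat; lra). lra.
Qed.

Lemma Flt1 p F : 0 < p -> is_Fp p F -> forall x, 0 <= x < 1 -> F x < 1.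
Proof.
  intros hp hF x hx. destruct (Rle_dec x (2/3)).
  - pose proof (Fmono p F hF x (2/3) ltac:(lra) ltac:(lra) ltac:(lra)). rewrite (F23 p F hp hF) in H.
    assert (1/(p+1) < 1) by (apply inv_p1; lra). lra.
  - rewrite (Fright p F hp hF x) by lra. pose proof (Fpos p F hp hF (3-3*x) ltac:(lra)).
    assert (0 < p * (F (3 - 3*x) / (p+1))) by (apply Rmult_lt_0_compat; [lra|apply Rdiv_lt_0_compat; lra]). lra.
Qed.

Lemma GG_pos p F : 0 < p -> is_Fp p F -> forall x, 0 <= x < 1 -> 0 < GG F x.
Proof. intros. unfold GG. rewrite Fe_id by lra. pose proof (Flt1 p F H H0 x H1). lra. Qed.

Lemma mrl_eq p F : 0 < p -> is_Fp p F -> forall x, 0 <= x <= 1 -> mrl F x = HH F x.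
Proof.
  intros hp hF x hx. unfold mrl, HH. destruct (Rlt_dec x 1).
  - rewrite (Defs_RInt_eq p F hp hF x 1) by lra. rewrite (RInt_G p F hp hF). unfold II, TT, GG.
    rewrite Fe_id by lra. reflexivity.
  - assert (x = 1) by lra. subst. unfold II, TT. rewrite RInt_point. change (zero : R) with 0.
    unfold Rdiv. replace (1 - 1 - 0) with 0 by ring. ring.
Qed.

Lemma div_le_aux a g c : 0 < g -> a <= c * g -> a / g <= c.
Proof. intros. apply Rmult_le_reg_r with g; [lra|]. unfold Rdiv. rewrite Rmult_assoc, Rinv_l by lra. lra. Qed.

Lemma II_1 F : II F 1 = 0.
Proof. unfold II, TT. rewrite RInt_point. change (zero : R) with 0. ring. Qed.

Lemma HH_bounds p F : 0 < p -> is_Fp p F -> forall x, 0 <= x <= 1 -> 0 <= HH F x <= 1 - x.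
Proof.
  intros hp hF x hx. unfold HH. destruct (Rlt_dec x 1).
  - pose proof (GG_pos p F hp hF x ltac:(lra)). pose proof (II_bounds p F hp hF x ltac:(lra)).
    split. apply Rdiv_le_0_compat; lra. apply div_le_aux; lra.
  - assert (x = 1) by lra. subst. rewrite II_1. unfold Rdiv. rewrite Rmult_0_l. lra.
Qed.

Lemma II_cont p F : 0 < p -> is_Fp p F -> forall x, continuity_pt (II F) x.
Proof.
  intros hp hF x. unfold continuity_pt, continue_in, limit1_in, limit_in. simpl. unfold R_dist.
  intros eps heps. exists eps. split; auto. intros y [_ hy].
  destruct (Rle_dec x y).
  - pose proof (II_lip p F hp hF x y r). rewrite Rabs_right in hy by lra. rewrite Rabs_left1 by lra. lra.
  - pose proof (II_lip p F hp hF y x ltac:(lra)). rewrite Rabs_left1 in hy by lra. rewrite Rabs_right by lra. lra.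
Qed.

Lemma GG_cont p F : 0 < p -> is_Fp p F -> forall x, continuity_pt (GG F) x.
Proof.
  intros hp hF x. apply continuity_pt_ext with (f := (fct_cte 1 - Fe F)%F).
  intros y. reflexivity.
  apply continuity_pt_minus. apply continuity_pt_const. intros a b. reflexivity. apply (Fe_cont p F hp hF).
Qed.

Lemma HH_cont p F : 0 < p -> is_Fp p F -> forall x, 0 <= x < 1 -> continuity_pt (HH F) x.
Proof.
  intros hp hF x hx. pose proof (GG_pos p F hp hF x hx).
  exact (continuity_pt_div _ _ _ (II_cont p F hp hF x) (GG_cont p F hp hF x) ltac:(lra)).
Qed.

Lemma part_ii_1 p F : 0 < p -> is_Fp p F ->
  forall x, 0 <= x <= 1 -> limit1_in (mrl F) (fun y => 0 <= y <= 1) (mrl F x) x.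
Proof.
  intros hp hF x hx. unfold limit1_in, limit_in. simpl. unfold R_dist. intros eps heps.
  destruct (Rlt_dec x 1).
  - pose proof (HH_cont p F hp hF x ltac:(lra)) as hc.
    unfold continuity_pt, continue_in, limit1_in, limit_in in hc. simpl in hc. unfold R_dist in hc.
    destruct (hc eps heps) as [alp [halp H]]. exists alp. split; auto.
    intros y [hy hd]. rewrite !(mrl_eq p F hp hF) by lra.
    destruct (Req_dec x y). subst. rewrite Rminus_diag, Rabs_R0. lra.
    apply H. split; auto. unfold D_x, no_cond. split; auto.
  - assert (x = 1) by lra. subst. exists eps. split; auto. intros y [hy hd].
    rewrite !(mrl_eq p F hp hF) by lra. pose proof (HH_bounds p F hp hF y hy). pose proof (HH_bounds p F hp hF 1 ltac:(lra)).
    assert (HH F 1 = 0) by lra. rewrite H1. rewrite Rminus_0_r. rewrite Rabs_right by lra.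
    rewrite Rabs_left1 in hd by lra. lra.
Qed.

Lemma part_ii_2 p F : 0 < p -> is_Fp p F -> forall x, 0 < x < 1 -> continuity_pt (gmrl F) x.
Proof.
  intros hp hF x hx.
  assert (hc : continuity_pt (fun y => HH F y / y) x).
  { exact (continuity_pt_div _ _ _ (HH_cont p F hp hF x ltac:(lra)) (continuity_pt_id x) ltac:(unfold id; lra)). }
  apply (continuity_pt_locally_ext (fun y => HH F y / y) (gmrl F) (Rmin x (1-x)) x). apply Rmin_pos; lra.
  2: exact hc.
  intros y hy. unfold Rdist in hy. pose proof (Rmin_l x (1-x)). pose proof (Rmin_r x (1-x)).
  unfold gmrl. rewrite (mrl_eq p F hp hF) by (unfold Rabs in hy; destruct Rcase_abs in hy; lra). reflexivity.
Qed.

Lemma part_i p F : 0 < p -> is_Fp p F -> mean F = 3 / 2 * (p / (2 * p + 1)).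
Proof.
  intros hp hF. unfold mean. rewrite (Defs_RInt_eq p F hp hF 0 1) by lra.
  rewrite (RInt_G p F hp hF). rewrite (S_val p F hp hF). unfold SS. field. lra.
Qed.

Definition hh F x := II F x - x * GG F x.

Lemma TT23 p F : 0 < p -> is_Fp p F -> TT F (2/3) = 1/3 - p/(3*(p+1)) * SS p.
Proof.
  intros hp hF. unfold TT. rewrite (RI_right p F hp hF) by lra.
  replace (3-3*1) with 0 by ring. replace (3-3*(2/3)) with 1 by field. rewrite (S_val p F hp hF). field. lra.
Qed.

Lemma TT_mid p F : 0 < p -> is_Fp p F -> forall x, 1/3 <= x <= 2/3 -> TT F x = (2/3 - x)/(p+1) + TT F (2/3).
Proof.
  intros hp hF x hx. unfold TT at 1. rewrite <- (Chas p F hp hF x (2/3) 1). rewrite (RI_mid p F hp hF) by lra. reflexivity.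
Qed.

Lemma TT_left p F : 0 < p -> is_Fp p F -> forall x, 0 <= x <= 1/3 -> TT F x = TT F (3*x) / (3*(p+1)) + TT F (1/3).
Proof.
  intros hp hF x hx. unfold TT at 1. rewrite <- (Chas p F hp hF x (1/3) 1). rewrite (RI_left p F hp hF) by lra.
  replace (3*(1/3)) with 1 by field. reflexivity.
Qed.

Lemma hh_mid p F : 0 < p -> is_Fp p F -> forall x, 1/3 <= x <= 2/3 -> hh F x = p/(p+1) * (2/3 - 2*x + SS p/3).
Proof.
  intros hp hF x hx. unfold hh, II, GG. rewrite (TT_mid p F hp hF x hx), (TT23 p F hp hF).
  rewrite Fe_id by lra. rewrite (Fmid p F hp hF x hx). field. lra.
Qed.

Lemma hh_left p F : 0 < p -> is_Fp p F -> forall x, 0 <= x <= 1/3 ->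
  (p+1) * hh F x = hh F (3*x) / 3 + p * (2/3 + SS p / 3) - 2 * p * x.
Proof.
  intros hp hF x hx. unfold hh, II, GG. rewrite (TT_left p F hp hF x hx).
  rewrite (TT_mid p F hp hF (1/3)) by lra. rewrite (TT23 p F hp hF).
  rewrite !Fe_id by lra. rewrite (Fleft p F hp hF x hx). field. lra.
Qed.

Definition BB p := p/(p+1) * Rmax (8/9) (1/(p+1)).

Lemma hh_right_lb p F : 0 < p -> is_Fp p F -> forall x, 2/3 <= x <= 1 -> - BB p <= hh F x.
Proof.
  intros hp hF x hx. unfold hh. pose proof (II_bounds p F hp hF x ltac:(lra)).
  unfold GG. rewrite Fe_id by lra. rewrite (Fright p F hp hF x hx).
  pose proof (Frange p F hp hF (3-3*x) ltac:(lra)).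
  pose proof (inv_p1 p hp).
  assert (0 < p/(p+1)) by (apply Rdiv_lt_0_compat; lra).
  unfold BB.
  replace (x * (1 - (1 - p * (F (3 - 3 * x) / (p + 1))))) with (p/(p+1) * (x * F (3-3*x))) by (field; lra).
  assert (x * F (3 - 3*x) <= Rmax (8/9) (1/(p+1))).
  { destruct (Rle_dec x (8/9)).
    - apply Rle_trans with (8/9). nra. apply Rmax_l.
    - pose proof (Fmono p F hF (3-3*x) (1/3) ltac:(lra) ltac:(lra) ltac:(lra)) as hm. rewrite (F13 p F hp hF) in hm.
      apply Rle_trans with (1/(p+1)). nra. apply Rmax_r. }
  nra.
Qed.

Lemma hh_mid_lb p F : 0 < p -> is_Fp p F -> forall x, 1/3 <= x <= 2/3 -> - BB p <= hh F x.
Proof.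
  intros hp hF x hx. rewrite (hh_mid p F hp hF x hx). unfold BB.
  assert (0 < p/(p+1)) by (apply Rdiv_lt_0_compat; lra).
  assert (0 <= SS p) by (unfold SS; apply Rdiv_le_0_compat; lra).
  pose proof (Rmax_l (8/9) (1/(p+1))). nra.
Qed.

Lemma BB_nonneg p : 0 < p -> 0 <= BB p.
Proof. intros hp. unfold BB. assert (0 < p/(p+1)) by (apply Rdiv_lt_0_compat; lra).
  pose proof (Rmax_l (8/9) (1/(p+1))). nra. Qed.

Lemma hh_lb p F : 0 < p -> is_Fp p F -> forall k y, 0 <= y <= 1 -> -(BB p + (1/3)^k) <= hh F y.
Proof.
  intros hp hF k. pose proof (BB_nonneg p hp).
  induction k as [|k IH]; intros y hy.
  - simpl. unfold hh. pose proof (II_bounds p F hp hF y ltac:(lra)). unfold GG.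
    pose proof (Fe_range p F hp hF y). nra.
  - destruct (Rle_dec y (1/3)).
    + pose proof (hh_left p F hp hF y ltac:(lra)). specialize (IH (3*y) ltac:(lra)).
      assert (0 <= SS p) by (unfold SS; apply Rdiv_le_0_compat; lra).
      assert (0 < (1/3)^k) by (apply pow_lt; lra). simpl.
      assert (0 <= p * (2/3 + SS p/3) - 2*p*y) by nra.
      assert ((p+1) * hh F y >= -(BB p + (1/3)^k)/3) by lra.
      destruct (Rle_dec 0 (hh F y)). nra. nra.
    + assert (0 < (1/3)^(S k)) by (apply pow_lt; lra).
      destruct (Rle_dec y (2/3)).
      * pose proof (hh_mid_lb p F hp hF y ltac:(lra)). lra.
      * pose proof (hh_right_lb p F hp hF y ltac:(lra)). lra.
Qed.

Lemma BB_lt p : 0 < p -> BB p < p * SS p.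
Proof.
  intros hp. unfold BB, SS. apply Rmax_case.
  - apply Rmult_lt_reg_r with ((p+1)*(4*p+2)/p). apply Rdiv_lt_0_compat; nra.
    field_simplify; try lra. apply Rmult_lt_reg_r with 9. lra. field_simplify; try lra. nra.
  - apply Rmult_lt_reg_r with ((p+1)*(p+1)*(4*p+2)/p). apply Rdiv_lt_0_compat; nra.
    field_simplify; try lra. nra.
Qed.

Lemma hh_left_pos p F : 0 < p -> is_Fp p F -> forall x, 0 <= x <= 1/3 -> 0 < hh F x.
Proof.
  intros hp hF x hx. pose proof (BB_lt p hp).
  destruct (pow_lt_1_zero (1/3) ltac:(rewrite Rabs_right; lra) (p * SS p - BB p) ltac:(lra)) as [N HN].
  specialize (HN N (le_n _)). rewrite Rabs_right in HN by (apply Rle_ge, pow_le; lra).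
  pose proof (hh_lb p F hp hF N (3*x) ltac:(lra)). pose proof (hh_left p F hp hF x hx).
  assert (0 < (p+1) * hh F x) by nra.
  destruct (Rle_dec (hh F x) 0); [nra|lra].
Qed.

Lemma hh_right_neg p F : 0 < p -> is_Fp p F -> forall x, 2/3 <= x < 1 -> hh F x < 0.
Proof.
  intros hp hF x hx. unfold hh. pose proof (II_bounds p F hp hF x ltac:(lra)).
  pose proof (GG_pos p F hp hF x ltac:(lra)). nra.
Qed.

Lemma mrl_fix_iff p F : 0 < p -> is_Fp p F -> forall x, 0 <= x < 1 -> (mrl F x = x <-> hh F x = 0).
Proof.
  intros hp hF x hx. rewrite (mrl_eq p F hp hF) by lra. unfold HH, hh.
  pose proof (GG_pos p F hp hF x hx). split; intros h.
  - assert (II F x = (II F x / GG F x) * GG F x) by (field; lra). rewrite h in H0. lra.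
  - assert (II F x = x * GG F x) by lra. rewrite H0. field. lra.
Qed.

Lemma xstar_eq p : 0 < p -> xstar p = 1/3 + SS p / 6.
Proof. intros. unfold xstar, SS. field. lra. Qed.

Lemma SS_bounds p : 0 < p -> 0 < SS p < 1.
Proof. intros. unfold SS. split. apply Rdiv_lt_0_compat; lra.
  apply Rmult_lt_reg_r with (4*p+2). lra. field_simplify; lra. Qed.

Lemma fix_uniq p F : 0 < p -> is_Fp p F -> forall x, 0 <= x <= 1 -> mrl F x = x -> x = xstar p.
Proof.
  intros hp hF x hx h. destruct (Rlt_dec x 1).
  2:{ assert (x = 1) by lra. subst. rewrite (mrl_eq p F hp hF) in h by lra.
      pose proof (HH_bounds p F hp hF 1 ltac:(lra)). lra. }
  apply (mrl_fix_iff p F hp hF x ltac:(lra)) in h.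
  destruct (Rle_dec x (1/3)). { pose proof (hh_left_pos p F hp hF x ltac:(lra)). lra. }
  destruct (Rle_dec (2/3) x). { pose proof (hh_right_neg p F hp hF x ltac:(lra)). lra. }
  rewrite (hh_mid p F hp hF x ltac:(lra)) in h. rewrite (xstar_eq p hp).
  assert (0 < p/(p+1)) by (apply Rdiv_lt_0_compat; lra).
  apply Rmult_integral in h as [h|h]; lra.
Qed.

Lemma fix_exists p F : 0 < p -> is_Fp p F -> 0 <= xstar p <= 1 /\ mrl F (xstar p) = xstar p.
Proof.
  intros hp hF. rewrite (xstar_eq p hp). pose proof (SS_bounds p hp). split. lra.
  apply (mrl_fix_iff p F hp hF); [lra|]. rewrite (hh_mid p F hp hF) by lra. field. lra.
Qed.

Lemma xstar_decr q1 q2 : 0 < q1 -> q1 < q2 -> xstar q2 < xstar q1.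
Proof.
  intros h1 h2. unfold xstar.
  assert ((5*q2+4)/(12*(2*q2+1)) < (5*q1+4)/(12*(2*q1+1))); [|lra].
  apply Rmult_lt_reg_r with (12*(2*q2+1)*(2*q1+1)). nra.
  field_simplify; try lra; nra.
Qed.

Lemma xstar_bounds q : 0 < q -> 3/8 < xstar q < 1/2.
Proof.
  intros hq. unfold xstar. split.
  - assert (5/24 < (5*q+4)/(12*(2*q+1))); [|lra]. apply Rmult_lt_reg_r with (12*(2*q+1)). nra. field_simplify; lra.
  - assert ((5*q+4)/(12*(2*q+1)) < 1/3); [|lra]. apply Rmult_lt_reg_r with (12*(2*q+1)). nra. field_simplify; lra.
Qed.

Lemma Cn_range n x : in_Cn n x -> 0 <= x <= 1.
Proof.
  revert x. induction n as [|k IH]; intros x h; simpl in h; auto.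
  destruct h as [h|h]; apply IH in h; lra.
Qed.

Lemma Cn_sym n x : in_Cn n x <-> in_Cn n (1 - x).
Proof.
  revert x. induction n as [|k IH]; intros x; simpl. lra.
  rewrite (IH (3*x)), (IH (3*x-2)).
  replace (1 - 3*x) with (3*(1-x) - 2) by ring. replace (1 - (3*x-2)) with (3*(1-x)) by ring. tauto.
Qed.

Lemma Cn_0 n : in_Cn n 0.
Proof. induction n; simpl. lra. left. replace (3*0) with 0 by ring. auto. Qed.

Lemma Cn_1 n : in_Cn n 1.
Proof. apply Cn_sym. replace (1-1) with 0 by ring. apply Cn_0. Qed.

Lemma gap p F : 0 < p -> is_Fp p F -> forall n x, 0 <= x <= 1 -> ~ in_Cn n x ->
  exists a b, a < x < b /\ forall u, a < u < b -> 0 <= u <= 1 -> F u = F x.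
Proof.
  intros hp hF n. pose proof hF as [hm [ha hb]]. induction n as [|k IH]; intros x hx hn.
  - simpl in hn. tauto.
  - simpl in hn. apply not_or_and in hn as [h1 h2].
    destruct (Rle_dec x (1/3)).
    + assert (x <> 1/3). { intros e. subst. apply h1. replace (3*(1/3)) with 1 by field. apply Cn_1. }
      destruct (IH (3*x) ltac:(lra) h1) as [a [b [hab hu]]].
      exists (a/3), (Rmin (b/3) (1/3)). split.
      * split. lra. apply Rmin_glb_lt; lra.
      * intros u hu1 hu2. pose proof (Rmin_l (b/3) (1/3)). pose proof (Rmin_r (b/3) (1/3)).
        rewrite (Fleft p F hp hF u) by lra. rewrite (Fleft p F hp hF x) by lra.
        rewrite (hu (3*u)) by lra. reflexivity.
    + destruct (Rle_dec (2/3) x).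
      * assert (x <> 2/3). { intros e. subst. apply h2. replace (3*(2/3)-2) with 0 by field. apply Cn_0. }
        rewrite Cn_sym in h2. replace (1 - (3*x-2)) with (3-3*x) in h2 by ring.
        destruct (IH (3-3*x) ltac:(lra) h2) as [a [b [hab hu]]].
        exists (Rmax (2/3) ((3-b)/3)), ((3-a)/3). split.
        -- split. apply Rmax_lub_lt; lra. lra.
        -- intros u hu1 hu2. pose proof (Rmax_l (2/3) ((3-b)/3)). pose proof (Rmax_r (2/3) ((3-b)/3)).
           rewrite (Fright p F hp hF u) by lra. rewrite (Fright p F hp hF x) by lra.
           rewrite (hu (3-3*u)) by lra. reflexivity.
      * exists (1/3), (2/3). split. lra. intros u hu1 hu2.
        rewrite (Fmid p F hp hF u) by lra. rewrite (Fmid p F hp hF x) by lra. reflexivity.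
Qed.

Lemma L0 p F : 0 < p -> is_Fp p F -> forall j, exists a b, 0 <= a < b /\ b <= 1 /\
  (1 + INR j / 2) * (b - a) <= F b - F a.
Proof.
  intros hp hF j. pose proof hF as [hm [ha hb]]. induction j as [|j IH].
  - exists 0, 1. rewrite (F0 p F hp hF), (F1 p F hp hF). simpl. lra.
  - destruct IH as [a [b [hab [hb1 hr]]]]. rewrite S_INR.
    assert (0 <= INR j) by apply pos_INR.
    destruct (Rle_dec 1 p).
    + exists (1 - b/3), (1 - a/3). split. lra. split. lra.
      rewrite !hb by lra. rewrite !ha by lra.
      assert (1/2 <= p/(p+1)). { apply Rmult_le_reg_r with (2*(p+1)). lra. field_simplify; lra. }
      replace (1 - p * (F a / (p+1)) - (1 - p * (F b / (p+1)))) with (p/(p+1) * (F b - F a)) by (field; lra).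
      assert (0 <= (1 + INR j/2) * (b-a)) by nra.
      assert (1/2 * (F b - F a) <= p/(p+1) * (F b - F a)) by nra.
      nra.
    + exists (a/3), (b/3). split. lra. split. lra.
      rewrite !ha by lra.
      assert (1/2 <= 1/(p+1)). { apply Rmult_le_reg_r with (2*(p+1)). lra. field_simplify; lra. }
      replace (F b / (p+1) - F a / (p+1)) with (1/(p+1) * (F b - F a)) by (field; lra).
      assert (0 <= (1 + INR j/2) * (b-a)) by nra.
      assert (1/2 * (F b - F a) <= 1/(p+1) * (F b - F a)) by nra.
      nra.
Qed.

Lemma steep_base p F : 0 < p -> is_Fp p F -> forall K, exists a b, 0 < a < b /\ b < 1 /\ K * (b - a) < F b - F a.
Proof.
  intros hp hF K. pose proof hF as [hm [ha hb]].
  destruct (INR_unbounded (2 * Rabs K * (p+1)*(p+1) / (9*p))) as [j hj].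
  destruct (L0 p F hp hF j) as [a [b [hab [hb1 hr]]]].
  exists ((1 - b/3)/3), ((1 - a/3)/3). split. lra. split. lra.
  rewrite !ha by lra. rewrite !hb by lra. rewrite !ha by lra.
  replace ((1 - p * (F a / (p+1))) / (p+1) - (1 - p * (F b / (p+1))) / (p+1)) with
    (p/((p+1)*(p+1)) * (F b - F a)) by (field; lra).
  assert (0 < p/((p+1)*(p+1))) by (apply Rdiv_lt_0_compat; nra).
  assert (hj2 : 2 * Rabs K * (p+1)*(p+1) < INR j * (9*p)).
  { assert (2 * Rabs K * (p+1)*(p+1) = (2 * Rabs K * (p+1)*(p+1) / (9*p)) * (9*p)) by (field; lra).
    rewrite H0. apply Rmult_lt_compat_r. lra. exact hj. }
  assert (K <= Rabs K) by apply Rle_abs. assert (0 <= Rabs K) by apply Rabs_pos.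
  replace ((1 - a/3)/3 - (1 - b/3)/3) with ((b - a)/9) by field.
  apply Rlt_le_trans with (p/((p+1)*(p+1)) * ((1 + INR j/2) * (b-a))); [|nra].
  assert (K * (b-a)/9 < p/((p+1)*(p+1)) * (1 + INR j/2) * (b-a)); [|nra].
  assert (K * ((p+1)*(p+1)) < p * 9 * (1 + INR j/2)) by nra.
  apply Rmult_lt_reg_r with (9*((p+1)*(p+1))). nra.
  field_simplify; try nra.
Qed.

Lemma steep_n p F : 0 < p -> is_Fp p F -> forall n x, in_Cn n x -> forall K, exists a b,
  x - (1/3)^n <= a /\ a < b /\ b <= x + (1/3)^n /\ 0 < a /\ b < 1 /\ K * (b - a) < F b - F a.
Proof.
  intros hp hF n. pose proof hF as [hm [ha hb]]. induction n as [|k IH]; intros x hx K.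
  - simpl in hx |- *. destruct (steep_base p F hp hF K) as [a [b [h1 [h2 h3]]]].
    exists a, b. repeat split; lra.
  - simpl in hx. simpl. assert (0 < (1/3)^k) by (apply pow_lt; lra).
    destruct hx as [hx|hx].
    + destruct (IH (3*x) hx (K*(p+1)/3)) as [a [b [h1 [h2 [h3 [h4 [h5 h6]]]]]]].
      exists (a/3), (b/3). repeat split; try lra.
      rewrite !ha by lra.
      replace (F b / (p+1) - F a / (p+1)) with ((F b - F a)/(p+1)) by (field; lra).
      apply Rmult_lt_reg_r with (p+1). lra.
      replace ((F b - F a)/(p+1) * (p+1)) with (F b - F a) by (field; lra).
      replace (K * (b/3 - a/3) * (p+1)) with (K*(p+1)/3 * (b-a)) by field. exact h6.
    + rewrite Cn_sym in hx. replace (1 - (3*x-2)) with (3-3*x) in hx by ring.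
      destruct (IH (3-3*x) hx (K*(p+1)/(3*p))) as [a [b [h1 [h2 [h3 [h4 [h5 h6]]]]]]].
      exists (1 - b/3), (1 - a/3). repeat split; try lra.
      rewrite !hb by lra. rewrite !ha by lra.
      replace (1 - p * (F a / (p+1)) - (1 - p * (F b / (p+1)))) with (p/(p+1) * (F b - F a)) by (field; lra).
      assert (0 < p/(p+1)) by (apply Rdiv_lt_0_compat; lra).
      replace (K * (1 - a/3 - (1 - b/3))) with (p/(p+1) * (K*(p+1)/(3*p) * (b-a))) by (field; lra).
      apply Rmult_lt_compat_l; auto.
Qed.

Lemma cantor_steep p F : 0 < p -> is_Fp p F -> forall x, cantor x -> forall d K, 0 < d -> exists a b,
  x - d < a /\ a < b /\ b < x + d /\ 0 < a /\ b < 1 /\ K * (b - a) < F b - F a.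
Proof.
  intros hp hF x hx d K hd.
  destruct (pow_lt_1_zero (1/3) ltac:(rewrite Rabs_right; lra) d hd) as [N HN].
  specialize (HN N (le_n _)). rewrite Rabs_right in HN by (apply Rle_ge, pow_le; lra).
  destruct (steep_n p F hp hF N x (hx N) K) as [a [b [h1 [h2 [h3 [h4 [h5 h6]]]]]]].
  exists a, b. repeat split; lra.
Qed.

Lemma II_pos p F : 0 < p -> is_Fp p F -> forall c, 0 <= c < 1 -> 0 < II F c.
Proof.
  intros hp hF c hc. pose proof (II_split p F hp hF c ((1+c)/2)).
  pose proof (RInt_Fe_bounds p F hp hF c ((1+c)/2) ltac:(lra)).
  pose proof (II_bounds p F hp hF ((1+c)/2) ltac:(lra)).
  pose proof (GG_pos p F hp hF ((1+c)/2) ltac:(lra)). unfold GG in H2. nra.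
Qed.

Lemma alg1 Ia Ib ga gb L : 0 < gb -> gb <= ga -> ga <= 1 -> Ia <= L * ga + Ib -> 0 <= Ib ->
  Ib * (ga - gb) - L <= Ib / gb - Ia / ga.
Proof.
  intros. assert (Ia / ga <= L + Ib / ga).
  { apply div_le_aux. lra. replace ((L + Ib/ga) * ga) with (L*ga + Ib) by (field; lra). lra. }
  assert (Ib * (ga - gb) <= Ib / gb - Ib / ga); [|lra].
  replace (Ib / gb - Ib / ga) with (Ib * (ga - gb) / (ga * gb)) by (field; lra).
  assert (0 < ga*gb <= 1) by (split; nra).
  assert (0 <= Ib * (ga - gb)) by nra.
  apply Rmult_le_reg_r with (ga*gb). lra.
  replace (Ib * (ga - gb) / (ga * gb) * (ga*gb)) with (Ib * (ga - gb)) by (field; lra). nra.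
Qed.

Lemma key_ineq p F : 0 < p -> is_Fp p F -> forall a b, 0 < a -> a < b -> b < 1 ->
  II F b * (F b - F a) - (b - a) <= HH F b - HH F a.
Proof.
  intros hp hF a b ha hab hb. unfold HH.
  replace (F b - F a) with (GG F a - GG F b) by (unfold GG; rewrite !Fe_id by lra; ring).
  apply alg1.
  - apply (GG_pos p F hp hF). lra.
  - unfold GG. pose proof (Fe_mono p F hF a b ltac:(lra)). lra.
  - unfold GG. pose proof (Fe_range p F hp hF a). lra.
  - apply (II_decr_G p F hp hF). lra.
  - apply (II_bounds p F hp hF). lra.
Qed.

Lemma part_mrl p F : 0 < p -> is_Fp p F -> forall x, 0 < x < 1 -> (loc_decr (mrl F) x <-> ~ cantor x).
Proof.
  intros hp hF x hx. split.
  - intros [d [hd H]] hc.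
    set (d0 := Rmin d (Rmin (x/2) ((1-x)/2))).
    assert (hd0 : 0 < d0 /\ d0 <= d /\ d0 <= x/2 /\ d0 <= (1-x)/2).
    { unfold d0. pose proof (Rmin_l d (Rmin (x/2) ((1-x)/2))). pose proof (Rmin_r d (Rmin (x/2) ((1-x)/2))).
      pose proof (Rmin_l (x/2) ((1-x)/2)). pose proof (Rmin_r (x/2) ((1-x)/2)).
      repeat split; try lra. apply Rmin_pos; [lra|apply Rmin_pos; lra]. }
    set (c := x + d0). pose proof (II_pos p F hp hF c ltac:(unfold c; lra)) as hi.
    destruct (cantor_steep p F hp hF x hc d0 (1 / II F c) ltac:(lra)) as [a [b [h1 [h2 [h3 [h4 [h5 h6]]]]]]].
    specialize (H a b ltac:(lra) ltac:(lra) ltac:(lra) h4 h5).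
    rewrite !(mrl_eq p F hp hF) in H by lra.
    pose proof (key_ineq p F hp hF a b h4 h2 h5).
    pose proof (II_lip p F hp hF b c ltac:(unfold c; lra)).
    pose proof (Fmono p F hF a b ltac:(lra) ltac:(lra) ltac:(lra)) as hfm.
    assert (0 <= F b - F a) by lra.
    assert (II F c * (F b - F a) <= II F b * (F b - F a)) by nra.
    assert (1 / II F c * (b - a) * II F c = b - a) by (field; lra).
    nra.
  - intros hnc. apply not_all_ex_not in hnc as [n hn].
    destruct (gap p F hp hF n x ltac:(lra) hn) as [a [b [hab hu]]].
    exists (Rmin (x-a) (b-x)). split. apply Rmin_pos; lra.
    intros y z h1 h2 h3 h4 h5.
    pose proof (Rmin_l (x-a) (b-x)). pose proof (Rmin_r (x-a) (b-x)).
    rewrite !(mrl_eq p F hp hF) by lra.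
    assert (ey : F y = F x) by (apply hu; lra). assert (ez : F z = F x) by (apply hu; lra).
    unfold HH. assert (GG F y = GG F z) by (unfold GG; rewrite !Fe_id by lra; congruence).
    pose proof (II_split p F hp hF y z). pose proof (RInt_Fe_bounds p F hp hF y z h2).
    rewrite !Fe_id in H3 by lra. rewrite ey, ez in H3.
    pose proof (GG_pos p F hp hF z ltac:(lra)).
    rewrite H1. apply Rmult_le_compat_r. left; apply Rinv_0_lt_compat; lra.
    assert (GG F z = 1 - F x) by (unfold GG; rewrite Fe_id by lra; congruence).
    nra.
Qed.

Lemma part_gmrl p F : 0 < p -> is_Fp p F -> forall x, 0 < x < 1 -> (loc_decr (gmrl F) x <-> ~ cantor x).
Proof.
  intros hp hF x hx. split.
  - intros [d [hd H]] hc.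
    set (d0 := Rmin d (Rmin (x/2) ((1-x)/2))).
    assert (hd0 : 0 < d0 /\ d0 <= d /\ d0 <= x/2 /\ d0 <= (1-x)/2).
    { unfold d0. pose proof (Rmin_l d (Rmin (x/2) ((1-x)/2))). pose proof (Rmin_r d (Rmin (x/2) ((1-x)/2))).
      pose proof (Rmin_l (x/2) ((1-x)/2)). pose proof (Rmin_r (x/2) ((1-x)/2)).
      repeat split; try lra. apply Rmin_pos; [lra|apply Rmin_pos; lra]. }
    set (c := x + d0). pose proof (II_pos p F hp hF c ltac:(unfold c; lra)) as hi.
    destruct (cantor_steep p F hp hF x hc d0 (4 / (x * II F c)) ltac:(lra)) as [a [b [h1 [h2 [h3 [h4 [h5 h6]]]]]]].
    specialize (H a b ltac:(lra) ltac:(lra) ltac:(lra) h4 h5).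
    unfold gmrl in H. rewrite !(mrl_eq p F hp hF) in H by lra.
    pose proof (key_ineq p F hp hF a b h4 h2 h5).
    pose proof (II_lip p F hp hF b c ltac:(unfold c; lra)).
    pose proof (Fmono p F hF a b ltac:(lra) ltac:(lra) ltac:(lra)) as hfm.
    assert (0 <= F b - F a) by lra.
    assert (II F c * (F b - F a) <= II F b * (F b - F a)) by nra.
    assert (e1 : 4 / (x * II F c) * (b - a) * II F c = (4/x) * (b - a)) by (field; lra).
    assert (D : (4/x) * (b-a) - (b-a) < HH F b - HH F a) by nra.
    assert (e2 : 4 / x * x = 4) by (field; lra).
    assert (ha2 : x/2 <= a) by lra.
    assert (a * (4/x) >= 2) by nra.
    pose proof (HH_bounds p F hp hF a ltac:(lra)).
    assert (a * HH F b <= b * HH F a).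
    { assert (HH F b / b * (a*b) <= HH F a / a * (a*b)) by (apply Rmult_le_compat_r; nra).
      replace (HH F b / b * (a*b)) with (a * HH F b) in H6 by (field; lra).
      replace (HH F a / a * (a*b)) with (b * HH F a) in H6 by (field; lra). exact H6. }
    assert (a * ((4/x) * (b-a) - (b-a)) <= a * (HH F b - HH F a)) by nra.
    nra.
  - intros hnc. apply (part_mrl p F hp hF x hx) in hnc as [d [hd H]].
    exists d. split; auto. intros y z h1 h2 h3 h4 h5.
    specialize (H y z h1 h2 h3 h4 h5). unfold gmrl.
    pose proof (HH_bounds p F hp hF z ltac:(lra)). rewrite (mrl_eq p F hp hF z) in H |- * by lra.
    rewrite (mrl_eq p F hp hF y) in H |- * by lra.
    apply Rle_trans with (HH F y / z).
    + unfold Rdiv. apply Rmult_le_compat_r. left; apply Rinv_0_lt_compat; lra. exact H.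
    + unfold Rdiv. apply Rmult_le_compat_l. lra. apply Rinv_le_contravar; lra.
Qed.

Theorem theorem2 (p : R) (F : R -> R) (hp : 0 < p) (hF : is_Fp p F) :
  (* (i) *)
  mean F = 3 / 2 * (p / (2 * p + 1)) /\
  (* (ii) *)
  ((forall x, 0 <= x <= 1 -> limit1_in (mrl F) (fun y => 0 <= y <= 1) (mrl F x) x) /\
   (forall x, 0 < x < 1 -> continuity_pt (gmrl F) x) /\
   (forall x, 0 < x < 1 -> (loc_decr (mrl F) x <-> ~ cantor x)) /\
   (forall x, 0 < x < 1 -> (loc_decr (gmrl F) x <-> ~ cantor x))) /\
  (* (iii) *)
  ((exists! x, 0 <= x <= 1 /\ mrl F x = x) /\
   (forall x, 0 <= x <= 1 -> mrl F x = x -> x = xstar p) /\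
   (forall q1 q2, 0 < q1 -> q1 < q2 -> xstar q2 < xstar q1) /\
   (forall q, 0 < q -> 3 / 8 < xstar q < 1 / 2)).
Proof.
  split; [|split].
  - apply (part_i p F hp hF).
  - split; [|split; [|split]].
    + apply (part_ii_1 p F hp hF).
    + apply (part_ii_2 p F hp hF).
    + apply (part_mrl p F hp hF).
    + apply (part_gmrl p F hp hF).
  - split; [|split; [|split]].
    + exists (xstar p). split. apply (fix_exists p F hp hF).
      intros x' [hx' e]. symmetry. apply (fix_uniq p F hp hF x' hx' e).
    + apply (fix_uniq p F hp hF).
    + apply xstar_decr.
    + apply xstar_bounds.
Qed.
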